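(* Let $\varphi\colon\mathcal{A}\to\mathcal{A}^*$ be a substitution of constant length $k$. Then: (1) For any $x,y\in\mathcal{A}^{\mathbf{Z}}$ and $m\geq1$, $\varphi^m(x)=\varphi^m(y)$ if and only if $\Theta(x)=\Theta(y)$ for all $\Theta\in\mathrm{F}_{\varphi,m}$. (2) There exists $n\geq1$ such that $\varphi^n$ is column-constant.
   Context: $\varphi$ has constant length $k\geq2$ and acts on $\mathcal{A}^{\mathbf{Z}}$ by concatenation. For $i\in[0,k-1]$, $\Psi_i\colon\mathcal{A}\to\mathcal{A}$, $a\mapsto\varphi(a)_i$ (the $i$-th letter, indexing from $0$), extended letterwise to $\mathcal{A}^{\mathbf{Z}}$. For $\mathbf{i}=i_0\cdots i_{m-1}\in[0,k-1]^m$, $\Psi_{\mathbf{i}}=\Psi_{i_{m-1}}\circ\cdots\circ\Psi_{i_0}$ (identity if $m=0$), and $\mathrm{F}_{\varphi,m}=\{\Psi_{\mathbf{i}}:\mathbf{i}\in[0,k-1]^m\}$. A substitution $\psi$ of constant length is column-constant if the sets $\mathrm{F}_{\psi,m}$, $m\geq1$, are all equal. *)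

(* Defs.v *)
From HB Require Import structures.
From mathcomp Require Import all_boot all_order all_algebra.
Set Implicit Arguments. Unset Strict Implicit. Unset Printing Implicit Defensive.

Section Subst.
Variable A : finType.

(* A substitution is phi : A -> seq A; "constant length k" is the
   hypothesis forall a, size (phi a) = k, stated in the theorem. *)

(* Psi_i : a |-> phi(a)_i  (indexing from 0) *)
Definition Psi (phi : A -> seq A) (i : nat) (a : A) : A := nth a (phi a) i.

(* Psi_{i_0 ... i_{m-1}} = Psi_{i_{m-1}} o ... o Psi_{i_0}; identity if m = 0 *)
Definition Psiw (phi : A -> seq A) (w : seq nat) : A -> A :=
  foldl (fun f i => Psi phi i \o f) id w.

Definition Fset (phi : A -> seq A) (k m : nat) : {set {ffun A -> A}} :=
  [set [ffun a => Psiw phi (map val (tval w)) a] | w in {: m.-tuple 'I_k}].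

(* phi acting on A^Z by concatenation: phi(x)_{k n + i} = phi(x_n)_i *)
Definition subst_Z (phi : A -> seq A) (k : nat) (x : int -> A) : int -> A :=
  fun z => Psi phi (absz (z %% k%:Z)%Z) (x (z %/ k%:Z)%Z).

Definition subst_pow (phi : A -> seq A) (n : nat) : A -> seq A :=
  fun a => iter n (fun w => flatten (map phi w)) [:: a].

Definition column_constant (psi : A -> seq A) (l : nat) : Prop :=
  forall m1 m2 : nat, 0 < m1 -> 0 < m2 -> Fset psi l m1 = Fset psi l m2.

End Subst.

(* Main.v *)
Require Import Defs.
From HB Require Import structures.
From mathcomp Require Import all_boot all_order all_algebra.
From mathcomp Require Import zify.
From Stdlib Require Import FunctionalExtensionality.
Set Implicit Arguments. Unset Strict Implicit. Unset Printing Implicit Defensive.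

Section Aux.
Variable A : finType.
Implicit Types (phi : A -> seq A).

Lemma foldl_comp phi (f : A -> A) w a :
  foldl (fun g i => Psi phi i \o g) f w a = Psiw phi w (f a).
Proof.
elim: w f a => [|i w IH] f a //=.
rewrite IH /Psiw /=.
by rewrite (IH (Psi phi i \o id)).
Qed.

Lemma Psiw_cat phi w1 w2 a : Psiw phi (w1 ++ w2) a = Psiw phi w2 (Psiw phi w1 a).
Proof. by rewrite {1}/Psiw foldl_cat foldl_comp. Qed.

Lemma Psiw_rcons phi w d a : Psiw phi (rcons w d) a = Psi phi d (Psiw phi w a).
Proof. by rewrite -cats1 Psiw_cat. Qed.

Lemma map_val_pmap k (w : seq nat) : all (fun i => i < k) w ->
  map val (pmap insub w : seq 'I_k) = w.
Proof.
elim: w => [|x w IH] //= /andP[hx hw].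
by rewrite insubT /= IH.
Qed.

Lemma memF phi k m (f : {ffun A -> A}) :
  reflect (exists2 w : seq nat, (size w == m) && all (fun i => i < k) w
             & f = [ffun a => Psiw phi w a]) (f \in Fset phi k m).
Proof.
apply: (iffP imsetP) => [[t _ ->]|[w /andP[sw aw] ->]].
  exists (map val (tval t)) => //.
  rewrite size_map size_tuple eqxx /=; apply/allP => i /mapP [j _ ->].
  exact: ltn_ord.
have hs : size (pmap insub w : seq 'I_k) == m.
  by move: aw; rewrite all_count size_pmap_sub => /eqP ->.
exists (Tuple hs) => //=.
by rewrite map_val_pmap.
Qed.

Definition setcomp (S T : {set {ffun A -> A}}) : {set {ffun A -> A}} :=
  [set [ffun a => g (f a)] | f : {ffun A -> A} in S, g : {ffun A -> A} in T].

Lemma Fset_add phi k a b :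
  Fset phi k (a + b) = setcomp (Fset phi k a) (Fset phi k b).
Proof.
apply/setP => f; apply/memF/imset2P.
  move=> [w /andP[sw aw] ->].
  exists [ffun x => Psiw phi (take a w) x] [ffun x => Psiw phi (drop a w) x].
  - apply/memF; exists (take a w) => //.
    rewrite size_takel ?(eqP sw) ?leq_addr // eqxx /=.
    by apply/allP => i /mem_take hi; exact: (allP aw).
  - apply/memF; exists (drop a w) => //.
    rewrite size_drop (eqP sw) addKn eqxx /=.
    by apply/allP => i /mem_drop hi; exact: (allP aw).
  apply/ffunP => x; rewrite !ffunE.
  by rewrite -Psiw_cat cat_take_drop.
move=> [f1 g1 /memF[w1 /andP[s1 a1] ->] /memF[w2 /andP[s2 a2] ->] ->].
exists (w1 ++ w2).
  by rewrite size_cat (eqP s1) (eqP s2) eqxx all_cat a1 a2.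
by apply/ffunP => x; rewrite !ffunE Psiw_cat.
Qed.


End Aux.

Section Pow.
Variable A : finType.
Variable phi : A -> seq A.
Variable k : nat.
Hypothesis hk : 0 < k.
Hypothesis hphi : forall a : A, size (phi a) = k.

Lemma size_sp n a : size (subst_pow phi n a) = k ^ n.
Proof.
elim: n => [|n IH] //.
rewrite /subst_pow iterS -/(subst_pow phi n a) size_flatten /shape -map_comp.
rewrite (eq_map (g := fun=> k)); last by move=> x /=; rewrite hphi.
have -> : forall (s : seq A), map (fun=> k) s = nseq (size s) k.
  by elim => //= ? ? ->.
by rewrite sumn_nseq IH expnSr mulnC.
Qed.

Lemma nth_flat (s : seq A) x0 y0 q r : q < size s -> r < k ->
  nth x0 (flatten (map phi s)) (q * k + r) = nth x0 (phi (nth y0 s q)) r.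
Proof.
elim: s q => [|b s IH] [|q] //= hq hr.
  by rewrite nth_cat hphi hr.
rewrite nth_cat hphi mulSn -addnA ltnNge leq_addr /= addKn.
exact: IH.
Qed.

Lemma Psi_sp n q r a : q < k ^ n -> r < k ->
  Psi (subst_pow phi n.+1) (q * k + r) a = Psi phi r (Psi (subst_pow phi n) q a).
Proof.
move=> hq hr.
rewrite /Psi /subst_pow iterS -/(subst_pow phi n a).
rewrite (@nth_flat _ a a) //; last by rewrite size_sp.
by apply: set_nth_default; rewrite hphi.
Qed.

Lemma sp_digits n i : i < k ^ n ->
  exists2 u : seq nat, (size u == n) && all (fun j => j < k) u
    & forall a, Psi (subst_pow phi n) i a = Psiw phi u a.
Proof.
elim: n i => [|n IH] i hi.
  exists [::] => // a; move: hi; rewrite expn0 ltnS leqn0 => /eqP ->.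
  by rewrite /Psi /subst_pow.
have hq : i %/ k < k ^ n by rewrite ltn_divLR // -expnSr.
have [u /andP[su au] hu] := IH _ hq.
exists (rcons u (i %% k)).
  by rewrite size_rcons (eqP su) eqxx all_rcons ltn_pmod.
move=> a; rewrite {1}(divn_eq i k) Psi_sp ?ltn_pmod //.
by rewrite Psiw_rcons hu.
Qed.

Lemma sp_digits2 u : all (fun j => j < k) u ->
  exists2 i, i < k ^ (size u)
    & forall a, Psi (subst_pow phi (size u)) i a = Psiw phi u a.
Proof.
elim/last_ind: u => [|u r IH]; first by exists 0.
rewrite all_rcons => /andP[hr /IH [i hi hu]].
exists (i * k + r).
  rewrite size_rcons expnSr.
  have : i * k + r < i * k + k by rewrite ltn_add2l.
  move=> h; apply: (leq_trans h).
  by rewrite -mulSnr leq_mul2r hi orbT.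
move=> a; rewrite size_rcons Psi_sp // Psiw_rcons hu.
by [].
Qed.

Lemma Fset_sp1 n : Fset (subst_pow phi n) (k ^ n) 1 = Fset phi k n.
Proof.
apply/setP => f; apply/memF/memF.
  move=> [w /andP[sw aw] ->].
  case: w sw aw => [|i [|//]] //= _ /andP[hi _].
  have [u hu hu'] := sp_digits hi.
  exists u => //; apply/ffunP => a; rewrite !ffunE -hu'.
  by [].
move=> [u /andP[su au] ->].
have [i hi hu] := sp_digits2 au.
exists [:: i]; first by rewrite /= -(eqP su) hi.
by apply/ffunP => a; rewrite !ffunE -hu (eqP su).
Qed.

Lemma Fset_sp n m : Fset (subst_pow phi n) (k ^ n) m.+1 = Fset phi k (n * m.+1).
Proof.
elim: m => [|m IH]; first by rewrite muln1 Fset_sp1.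
have -> : m.+2 = m.+1 + 1 by rewrite addn1.
by rewrite Fset_add IH Fset_sp1 -Fset_add mulnDr muln1.
Qed.

End Pow.

Section Period.
Variable A : finType.
Variable phi : A -> seq A.
Variable k : nat.

Lemma Fset_period : exists n, 0 < n /\
  forall m, 0 < m -> Fset phi k (n * m) = Fset phi k n.
Proof.
pose S t := Fset phi k t.
pose N := #|{: {set {ffun A -> A}}}|.
pose f (t : 'I_N.+1) := S t.+1.
have [i [j [lt e]]] : exists i j : nat, i < j /\ S i.+1 = S j.+1.
  case E: [exists i : 'I_N.+1, exists j : 'I_N.+1, (i < j) && (f i == f j)].
    move/existsP: E => [i /existsP [j /andP[lt /eqP e]]].
    by exists i, j.
  exfalso.
  have inj : injective f.
    move=> i j e; apply: val_inj.
    case: (ltngtP i j) => // h; exfalso.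
      by move/negbT: E => /existsPn/(_ i)/existsPn/(_ j); rewrite h e eqxx.
    by move/negbT: E => /existsPn/(_ j)/existsPn/(_ i); rewrite h e eqxx.
  by have := leq_card _ inj; rewrite card_ord ltnn.
set i0 := i.+1; set p := j - i.
have hp : 0 < p by rewrite subn_gt0.
have per : forall t, S (i0 + p + t) = S (i0 + t).
  move=> t; have -> : i0 + p = j.+1 by rewrite /i0 /p; lia.
  by rewrite /S Fset_add -/(S j.+1) -e -Fset_add.
have per2 : forall q a, i0 <= a -> S (a + q * p) = S a.
  elim=> [|q IH] a ha; first by rewrite mul0n addn0.
  have -> : a + q.+1 * p = i0 + p + (a + q * p - i0).
    rewrite mulSn; lia.
  rewrite per.
  have -> : i0 + (a + q * p - i0) = a + q * p by lia.
  exact: IH.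
exists (i0 * p); split; first by rewrite muln_gt0 hp.
case=> // m _.
have -> : i0 * p * m.+1 = i0 * p + (m * i0) * p.
  by rewrite mulnS; congr (_ + _); rewrite mulnC mulnA.
apply: per2.
by rewrite leq_pmulr.
Qed.

End Period.

Section Part1.
Variable A : finType.
Variable phi : A -> seq A.
Variable k : nat.
Hypothesis hk : 0 < k.

Fixpoint wd (m : nat) (z : int) : seq nat :=
  if m is m'.+1 then rcons (wd m' (z %/ k%:Z)%Z) (absz (z %% k%:Z)%Z) else [::].
Fixpoint pos (m : nat) (z : int) : int :=
  if m is m'.+1 then pos m' (z %/ k%:Z)%Z else z.

Lemma iter_formula (x : int -> A) m z :
  iter m (subst_Z phi k) x z = Psiw phi (wd m z) (x (pos m z)).
Proof.
elim: m z => [|m IH] z //=.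
by rewrite /subst_Z IH Psiw_rcons.
Qed.

Lemma size_wd m z : size (wd m z) = m.
Proof. by elim: m z => [|m IH] z //=; rewrite size_rcons IH. Qed.

Lemma all_wd m z : all (fun i => i < k) (wd m z).
Proof.
elim: m z => [|m IH] z //=; rewrite all_rcons IH andbT.
have h1 : (0 <= (z %% k%:Z)%Z)%R by rewrite modz_ge0 // -lt0n.
have h2 : ((z %% k%:Z)%Z < k%:Z)%R by rewrite ltz_pmod // ltz_nat.
lia.
Qed.

Definition zz (w : seq nat) (n : int) : int :=
  foldl (fun acc d => acc * k%:Z + d%:Z)%R n w.

Lemma zz_spec w n : all (fun i => i < k) w ->
  wd (size w) (zz w n) = w /\ pos (size w) (zz w n) = n.
Proof.
elim/last_ind: w => [|w d IH] //.
rewrite all_rcons => /andP[hd /IH [h1 h2]].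
rewrite size_rcons /zz foldl_rcons -/(zz w n) /=.
have hq : ((zz w n * k%:Z + d%:Z)%R %/ k%:Z)%Z = zz w n.
  rewrite divzMDl; last by rewrite -lt0n.
  by rewrite divz_small ?GRing.addr0 //; apply/andP; split => //; rewrite ltz_nat.
have hr : ((zz w n * k%:Z + d%:Z)%R %% k%:Z)%Z = (d%:Z)%R.
  by rewrite modzMDl modz_small //; apply/andP; split => //; rewrite ltz_nat.
by rewrite hq hr h1 h2.
Qed.

End Part1.

Theorem lemma3p8 (A : finType) (phi : A -> seq A) (k : nat)
  (hk : 2 <= k) (hphi : forall a : A, size (phi a) = k) :
  (forall (x y : int -> A) (m : nat), 0 < m ->
     (iter m (subst_Z phi k) x = iter m (subst_Z phi k) y <->
      (forall Theta : {ffun A -> A}, Theta \in Fset phi k m ->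
         (fun z : int => Theta (x z)) = (fun z : int => Theta (y z)))))
  /\ (exists n : nat, 0 < n /\ column_constant (subst_pow phi n) (k ^ n)).
Proof.
have hk0 : 0 < k by apply: leq_trans hk.
split.
  move=> x y m _; split.
    move=> H Theta /memF [w /andP[sw aw] ->].
    apply: functional_extensionality => n; rewrite !ffunE.
    have [h1 h2] := zz_spec hk0 n aw.
    have := congr1 (fun g => g (zz k w n)) H.
    by rewrite /= !iter_formula -(eqP sw) h1 h2.
  move=> H; apply: functional_extensionality => z.
  rewrite !iter_formula.
  have hT : [ffun a => Psiw phi (wd k m z) a] \in Fset phi k m.
    apply/memF; exists (wd k m z) => //.
    by rewrite size_wd eqxx all_wd.
  have := congr1 (fun g => g (pos k m z)) (H _ hT).
  by rewrite /= !ffunE.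
have [n [hn hper]] := Fset_period phi k.
exists n; split => // m1 m2 h1 h2.
case: m1 h1 => // m1 _; case: m2 h2 => // m2 _.
by rewrite !Fset_sp // !hper.
Qed.
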